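(* Let $N\ge1$ and let $\mathcal A$ be an $(N,1,\mathbb L)$-$N$-CO-SF; let $\mathbb A$ be the set of its $N$ sequences. Partition $\mathbb A$ into disjoint nonempty subsets $\mathbb A^{(q)}$, $q\in Q$, such that within each subset all sequences have a common length $l_qN$ (with $l_q$ a positive integer) and a common energy. Index each subset arbitrarily as $\mathbb A^{(q)}=(\mathbf a^{(q)}_0,\dots,\mathbf a^{(q)}_{k_q-1})$ with $k_q=|\mathbb A^{(q)}|$. For each $q$, let $(\mathbf v^{(q),0},\dots,\mathbf v^{(q),k_q-1})$ be an arbitrary $(k_q,1,\mathbb L^{(q)})$-$k_q$-CO-SF, where $\mathbf v^{(q),m}$ has length $r_{q,m}k_q$ for a positive integer $r_{q,m}$. For $q\in Q$ and $0\le m<k_q$ define $$\mathbf s^{(q,m)}=\mathbf v^{(q),m}\odot\mathbb A^{(q)}=\big(v^{(q),m}_i\,\mathbf a^{(q)}_{[i]_{k_q}}\big)_{i=0}^{r_{q,m}k_q-1},$$ a sequence of length $r_{q,m}k_q\,l_qN$. Then the family of the $N$ sequences $\{\mathbf s^{(q,m)}\}_{q\in Q,\,0\le m<k_q}$ is an $(N,1,\mathbb L')$-$N$-CO-SF, where $\mathbb L'$ is the set of distinct values among $\{r_{q,m}k_ql_qN\}$.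
   Context: All sequences are finite complex sequences. A sequence $\mathbf s=(s_0,\dots,s_{L-1})$ of length $L$ is identified with the function $s:\mathbb Z\to\mathbb C$ given by $s(n)=s_n$ for $0\le n<L$ and $s(n)=0$ otherwise. For sequences $\mathbf s,\mathbf s'$ of lengths $L,L'$ (possibly different), the aperiodic correlation is $R_{\mathbf s,\mathbf s'}(\tau)=\sum_{l=0}^{L-1}s(l)\,\overline{s'(l+\tau)}$ for $\tau\in\mathbb Z$. The energy of $\mathbf s$ is $E_{\mathbf s}=R_{\mathbf s,\mathbf s}(0)$. An $(M,1,\mathbb L)$-$N$-shift cross-orthogonal sequence family ($N$-CO-SF) is an indexed family $(\mathbf s^0,\dots,\mathbf s^{M-1})$ of complex sequences, where $\mathbf s^m$ has length $L^{(m)}$ divisible by $N$, and $\mathbb L$ is the set of distinct values among $L^{(0)},\dots,L^{(M-1)}$, such that for all $0\le m,m'<M$ and all $k\in\mathbb Z$, $R_{\mathbf s^m,\mathbf s^{m'}}(kN)=E_{\mathbf s^m}\,\delta(m-m')\,\delta(k)$, where $\delta$ is the Kronecker delta. Connection operator: for a vector $\mathbf v=(v_0,\dots,v_{K'-1})$ and an indexed set $\mathbb A=(\mathbf a_0,\dots,\mathbf a_{M-1})$ of $M$ sequences of common length $L$, with $K=\mathrm{lcm}(M,K')$, $\mathbf v\odot\mathbb A$ is the length-$KL$ concatenation $\big(v_{[k]_{K'}}\mathbf a_{[k]_M}\big)_{k=0}^{K-1}$, where $[a]_b$ is the remainder of $a$ modulo $b$. *)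

(* Defs.v *)
(* Complex numbers are modelled by an arbitrary
   numClosedFieldType C (with its conjugation Num.conj). *)
From HB Require Import structures.
From mathcomp Require Import all_boot all_order all_algebra.
Set Implicit Arguments. Unset Strict Implicit. Unset Printing Implicit Defensive.
Import Order.TTheory GRing.Theory Num.Theory.
Local Open Scope ring_scope.

Definition seqval (C : numClosedFieldType) (s : seq C) (n : int) : C :=
  match n with Posz k => nth 0 s k | Negz _ => 0 end.

Definition acorr (C : numClosedFieldType) (s s' : seq C) (tau : int) : C :=
  \sum_(l < size s) nth 0 s l * Num.conj (seqval s' (Posz l + tau)).

Definition energy (C : numClosedFieldType) (s : seq C) : C := acorr s s 0.

(* (M,1,L)-N-shift cross-orthogonal sequence family, indexed by a finite
   type I with #|I| = M; the set L of lengths is determined by the family. *)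
Definition is_COSF (C : numClosedFieldType) (N M : nat) (I : finType)
  (S : I -> seq C) : Prop :=
  #|I| = M /\
  (forall m, (N %| size (S m))%N) /\
  (forall (m m' : I) (k : int),
     acorr (S m) (S m') (k * (N%:Z)) =
       if (m == m') && (k == 0) then energy (S m) else 0).

(* connection operator v (.) A for A = (a_0,...,a_{M-1}) given as a list *)
Definition connect_op (C : numClosedFieldType) (v : seq C) (As : seq (seq C))
  : seq C :=
  flatten (mkseq (fun i => map (fun x => nth 0 v (i %% size v) * x)
                              (nth [::] As (i %% size As)))
                 (lcmn (size As) (size v))).

(* Main.v *)
Require Import Defs.
From HB Require Import structures.
From mathcomp Require Import all_boot all_order all_algebra.
Import Order.TTheory GRing.Theory Num.Theory.
Local Open Scope ring_scope.



Lemma seqval_neg (C : numClosedFieldType) (s : seq C) n : n < 0 -> seqval s n = 0.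
Proof. by case: n. Qed.

Lemma seqval_cat (C : numClosedFieldType) (b t : seq C) n :
  seqval (b ++ t) n = seqval b n + seqval t (n - (size b)%:Z).
Proof.
case: n => [p|p] /=.
  case: (ltnP p (size b)) => h.
    rewrite nth_cat h seqval_neg ?addr0 //.
    by rewrite subr_lt0 ltz_nat.
  rewrite nth_cat ltnNge h /= (nth_default 0 h) add0r subzn //.
rewrite add0r seqval_neg //.
have H : Negz p < 0 by [].
by apply: (le_lt_trans _ H); rewrite lerBlDr lerDl.
Qed.

Lemma acorr_cat (C : numClosedFieldType) (b t s' : seq C) tau :
  acorr (b ++ t) s' tau = acorr b s' tau + acorr t s' (tau + (size b)%:Z).
Proof.
rewrite /acorr size_cat big_split_ord /=; congr (_ + _).
  by apply: eq_bigr => i _; rewrite /= nth_cat ltn_ord.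
apply: eq_bigr => i _; rewrite /= nth_cat ltnNge leq_addr /= addKn.
rewrite PoszD; congr (_ * _^*); congr (seqval _ _).
by rewrite -addrA addrC addrA.
Qed.

Lemma acorr_flattenl (C : numClosedFieldType) (L : nat) (bs : seq (seq C)) (s' : seq C) tau :
  (forall b, b \in bs -> size b = L) ->
  acorr (flatten bs) s' tau =
  \sum_(i < size bs) acorr (nth [::] bs i) s' (tau + (i * L)%N%:Z).
Proof.
elim: bs tau => [|b bs IH] tau H /=.
  by rewrite big_ord0 /acorr big_ord0.
rewrite acorr_cat IH; last by move=> x hx; apply: H; rewrite inE hx orbT.
rewrite big_ord_recl /= mul0n addr0 H ?mem_head //; congr (_ + _).
by apply: eq_bigr => i _; rewrite /bump /= add1n mulSn PoszD addrA.
Qed.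

Lemma seqval_nil (C : numClosedFieldType) n : seqval [::] n = 0 :> C.
Proof. by case: n => [[]|]. Qed.

Lemma seqval_flatten (C : numClosedFieldType) (L : nat) (bs : seq (seq C)) n :
  (forall b, b \in bs -> size b = L) ->
  seqval (flatten bs) n =
  \sum_(i < size bs) seqval (nth [::] bs i) (n - (i * L)%N%:Z).
Proof.
elim: bs n => [|b bs IH] n H /=.
  by rewrite big_ord0 seqval_nil.
rewrite seqval_cat IH; last by move=> x hx; apply: H; rewrite inE hx orbT.
rewrite big_ord_recl /= mul0n subr0 H ?mem_head //; congr (_ + _).
by apply: eq_bigr => i _; rewrite /bump /= add1n mulSn PoszD opprD addrA.
Qed.

Lemma acorr_flattenr (C : numClosedFieldType) (L : nat) (a : seq C) (bs : seq (seq C)) sigma :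
  (forall b, b \in bs -> size b = L) ->
  acorr a (flatten bs) sigma =
  \sum_(i < size bs) acorr a (nth [::] bs i) (sigma - (i * L)%N%:Z).
Proof.
move=> H; rewrite /acorr.
under eq_bigr => l _ do rewrite (seqval_flatten _ _ _ _ H) rmorph_sum mulr_sumr.
rewrite exchange_big /=; apply: eq_bigr => i _; apply: eq_bigr => l _.
by rewrite addrA.
Qed.

Lemma acorr_mapl (C : numClosedFieldType) (c : C) (a b : seq C) tau :
  acorr (map (fun x => c * x) a) b tau = c * acorr a b tau.
Proof.
rewrite /acorr size_map mulr_sumr; apply: eq_bigr => i _.
by rewrite (nth_map 0) ?mulrA.
Qed.

Lemma seqval_map (C : numClosedFieldType) (c : C) (b : seq C) n :
  seqval (map (fun x => c * x) b) n = c * seqval b n.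
Proof.
case: n => [p|p] /=; last by rewrite mulr0.
case: (ltnP p (size b)) => h; first by rewrite (nth_map 0).
by rewrite !nth_default ?mulr0 ?size_map.
Qed.

Lemma acorr_mapr (C : numClosedFieldType) (c : C) (a b : seq C) tau :
  acorr a (map (fun x => c * x) b) tau = c^* * acorr a b tau.
Proof.
rewrite /acorr mulr_sumr; apply: eq_bigr => i _.
by rewrite seqval_map rmorphM mulrCA.
Qed.

Lemma mem_mkseq_size (C : numClosedFieldType) (F : nat -> seq C) R L :
  (forall i, (i < R)%N -> size (F i) = L) ->
  forall b, b \in mkseq F R -> size b = L.
Proof.
move=> H b; rewrite /mkseq => /mapP [i]; rewrite mem_iota add0n => hi ->.
exact: H.
Qed.

Lemma size_flatten_const (C : numClosedFieldType) (L : nat) (bs : seq (seq C)) :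
  (forall b, b \in bs -> size b = L) -> size (flatten bs) = (size bs * L)%N.
Proof.
elim: bs => [|b bs IH] H //=.
rewrite size_cat IH ?H ?mem_head ?mulSn //.
by move=> x hx; apply: H; rewrite inE hx orbT.
Qed.

Lemma acorr_blocks (C : numClosedFieldType) (f g : nat -> seq C) (c c' : nat -> C) R R' L L' tau :
  (forall i, (i < R)%N -> size (f i) = L) ->
  (forall i, (i < R')%N -> size (g i) = L') ->
  acorr (flatten (mkseq (fun i => map (fun x => c i * x) (f i)) R))
        (flatten (mkseq (fun i => map (fun x => c' i * x) (g i)) R')) tau
  = \sum_(i < R) \sum_(i' < R') c i * (c' i')^* *
       acorr (f i) (g i') (tau + (i * L)%N%:Z - (i' * L')%N%:Z).
Proof.
move=> Hf Hg.
rewrite (acorr_flattenl _ L); last first.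
  by apply: mem_mkseq_size => i hi; rewrite size_map Hf.
rewrite size_mkseq; apply: eq_bigr => i _.
rewrite nth_mkseq // acorr_mapl (acorr_flattenr _ L'); last first.
  by apply: mem_mkseq_size => j hj; rewrite size_map Hg.
rewrite size_mkseq mulr_sumr; apply: eq_bigr => j _.
by rewrite nth_mkseq // acorr_mapr mulrA.
Qed.


Lemma shift_eq (K : int) (i l i' l' N : nat) :
  K * N%:Z + (i * (l * N))%N%:Z - (i' * (l' * N))%N%:Z
  = (K + (i * l)%N%:Z - (i' * l')%N%:Z) * N%:Z.
Proof. by rewrite !PoszM mulrBl mulrDl !mulrA. Qed.

Lemma sum_pick (C : numClosedFieldType) (v' : seq C) R' (x : int) :
  size v' = R' ->
  \sum_(i' < R') (if (i' : int) == x then (nth 0 v' i')^* else 0) = (seqval v' x)^*.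
Proof.
move=> Hs; case: x => [p|p] /=.
  case: (ltnP p R') => hp.
    rewrite (bigD1 (Ordinal hp)) //= eqxx big1 ?addr0 // => j hj.
    rewrite eqz_nat; case: eqP => // E; move: hj.
    by rewrite -val_eqE /= E eqxx.
  rewrite big1 ?nth_default ?rmorph0 ?Hs // => j _.
  by rewrite eqz_nat ltn_eqF // (leq_trans (ltn_ord j) hp).
by rewrite big1 ?rmorph0.
Qed.

Theorem theorem3 (C : numClosedFieldType) (N : nat) (HN : (1 <= N)%N)
  (A : 'I_N -> seq C) (HA : is_COSF N N A)
  (Q : finType) (k : Q -> nat) (Hk : forall q, (0 < k q)%N)
  (idx : {q : Q & 'I_(k q)} -> 'I_N) (Hidx : bijective idx)
  (l : Q -> nat) (Hl : forall q, (0 < l q)%N)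
  (Hlen : forall q (j : 'I_(k q)), size (A (idx (Tagged _ j))) = (l q * N)%N)
  (Hen : forall q (j j' : 'I_(k q)),
     energy (A (idx (Tagged _ j))) = energy (A (idx (Tagged _ j'))))
  (V : forall q, 'I_(k q) -> seq C) (HV : forall q, is_COSF (k q) (k q) (V q))
  (r : forall q, 'I_(k q) -> nat) (Hr : forall q m, (0 < r q m)%N)
  (HVlen : forall q m, size (V q m) = (r q m * k q)%N) :
  is_COSF N N (fun qm : {q : Q & 'I_(k q)} =>
    connect_op (V (tag qm) (tagged qm))
      [seq A (idx (Tagged (fun q => 'I_(k q)) j)) | j <- enum 'I_(k (tag qm))]).
Proof.
have [HAcard [HAdiv HAcor]] := HA.
have nthAs : forall q (i : nat),
  nth [::] [seq A (idx (Tagged (fun q => 'I_(k q)) j)) | j <- enum 'I_(k q)] (i %% k q)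
  = A (idx (Tagged (fun q => 'I_(k q)) (Ordinal (ltn_pmod i (Hk q))))).
  move=> q i.
  rewrite (nth_map (Ordinal (ltn_pmod i (Hk q)))) ?size_enum_ord ?ltn_pmod //.
  congr (A (idx (Tagged _ _))); apply: val_inj => /=.
  by rewrite nth_enum_ord // ltn_pmod.
have sizeAs : forall q (i : nat),
  size (nth [::] [seq A (idx (Tagged (fun q => 'I_(k q)) j)) | j <- enum 'I_(k q)] (i %% k q))
  = (l q * N)%N.
  by move=> q i; rewrite nthAs Hlen.
have connE : forall q m, connect_op (V q m)
    [seq A (idx (Tagged (fun q => 'I_(k q)) j)) | j <- enum 'I_(k q)] =
  flatten (mkseq (fun i => map (fun x => nth 0 (V q m) (i %% (r q m * k q)) * x)
     (nth [::] [seq A (idx (Tagged (fun q => 'I_(k q)) j)) | j <- enum 'I_(k q)] (i %% k q)))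
     (r q m * k q)).
  move=> q m; rewrite /connect_op size_map size_enum_ord HVlen.
  by rewrite (lcmn_idPr (dvdn_mull _ (dvdnn _))).
split; first by rewrite (bij_eq_card Hidx) card_ord.
split.
  move=> [q m] /=; rewrite connE (size_flatten_const _ (l q * N)) ?size_mkseq.
    by rewrite mulnA dvdn_mull.
  by apply: mem_mkseq_size => i _; rewrite size_map sizeAs.
move=> [q m] [q' m'] K.
case: ifP => Hc.
  by move/andP: Hc => [/eqP <- /eqP ->]; rewrite mul0r.
rewrite /= !connE (acorr_blocks _ _ _ _ _ _ _ (l q * N) (l q' * N)); last first.
- by move=> i _; rewrite sizeAs.
- by move=> i _; rewrite sizeAs.
have Hterm : forall (i i' : nat),
  acorr (nth [::] [seq A (idx (Tagged (fun q => 'I_(k q)) j)) | j <- enum 'I_(k q)] (i %% k q))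
        (nth [::] [seq A (idx (Tagged (fun q => 'I_(k q)) j)) | j <- enum 'I_(k q')] (i' %% k q'))
        (K * N%:Z + (i * (l q * N))%N%:Z - (i' * (l q' * N))%N%:Z)
  = if (Tagged (fun q => 'I_(k q)) (Ordinal (ltn_pmod i (Hk q))) ==
        Tagged (fun q => 'I_(k q)) (Ordinal (ltn_pmod i' (Hk q'))))
       && (K + (i * l q)%N%:Z - (i' * l q')%N%:Z == 0)
    then energy (A (idx (Tagged (fun q => 'I_(k q)) (Ordinal (ltn_pmod i (Hk q))))))
    else 0.
  by move=> i i'; rewrite !nthAs shift_eq HAcor (inj_eq (bij_inj Hidx)).
case: (eqVneq q q') => [Eq|Nq]; last first.
  apply: big1 => i _; apply: big1 => i' _; rewrite Hterm.
  have -> : (Tagged (fun q => 'I_(k q)) (Ordinal (ltn_pmod i (Hk q))) ==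
        Tagged (fun q => 'I_(k q)) (Ordinal (ltn_pmod i' (Hk q')))) = false.
    apply/negbTE/negP => /eqP /(congr1 tag) /= E.
    by move: Nq; rewrite E eqxx.
  by rewrite /= mulr0.
subst q'.
set E0 := energy (A (idx (Tagged (fun q => 'I_(k q)) (Ordinal (Hk q))))).
have Hterm2 : forall (i : 'I_(r q m * k q)) (i' : 'I_(r q m' * k q)),
  nth 0 (V q m) (i %% (r q m * k q)) * (nth 0 (V q m') (i' %% (r q m' * k q)))^* *
  acorr (nth [::] [seq A (idx (Tagged (fun q => 'I_(k q)) j)) | j <- enum 'I_(k q)] (i %% k q))
        (nth [::] [seq A (idx (Tagged (fun q => 'I_(k q)) j)) | j <- enum 'I_(k q)] (i' %% k q))
        (K * N%:Z + (i * (l q * N))%N%:Z - (i' * (l q * N))%N%:Z)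
  = if ((i %% k q)%N == (i' %% k q)%N) && (K + (i * l q)%N%:Z - (i' * l q)%N%:Z == 0)
    then nth 0 (V q m) i * (nth 0 (V q m') i')^* * E0 else 0.
  move=> i i'; rewrite Hterm eq_Tagged /= -val_eqE /= (Hen q _ (Ordinal (Hk q))).
  rewrite (modn_small (ltn_ord i)) (modn_small (ltn_ord i')).
  by case: ifP; rewrite ?mulr0 ?mulr1.
rewrite (eq_bigr _ (fun i _ => eq_bigr _ (fun i' _ => Hterm2 i i'))).
have [Hex|Hnex] := boolP [exists i : 'I_(r q m * k q), exists i' : 'I_(r q m' * k q),
   ((i %% k q)%N == (i' %% k q)%N) && (K + (i * l q)%N%:Z - (i' * l q)%N%:Z == 0)];
   last first.
  apply: big1 => i _; apply: big1 => i' _.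
  case: ifP => // hc; case/negP: Hnex; apply/existsP; exists i; apply/existsP.
  by exists i'.
case/existsP: Hex => i0 /existsP [i0' /andP [h1 h2]].
pose D : int := (i0' %/ k q)%N%:Z - (i0 %/ k q)%N%:Z.
have HK : K = D * (k q)%:Z * (l q)%:Z.
  have E1 : (i0' : int) - (i0 : int) = D * (k q)%:Z.
    rewrite {1}(divn_eq i0' (k q)) {1}(divn_eq i0 (k q)) (eqP h1) !PoszD !PoszM.
    by rewrite opprD addrACA subrr addr0 /D mulrBl.
  have h3 : K + (i0 * l q)%N%:Z = (i0' * l q)%N%:Z by apply/eqP; rewrite -subr_eq0.
  by rewrite -E1 mulrBl -!PoszM -h3 addrK.
clearbody D.
have lq0 : (l q)%:Z != 0 by rewrite eqz_nat -lt0n Hl.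
have Hcond : forall (i i' : nat),
  ((i %% k q)%N == (i' %% k q)%N) && (K + (i * l q)%N%:Z - (i' * l q)%N%:Z == 0)
  = ((i' : int) == i%:Z + D * (k q)%:Z).
  move=> i i'; rewrite HK.
  have -> : D * (k q)%:Z * (l q)%:Z + (i * l q)%N%:Z - (i' * l q)%N%:Z
      = (D * (k q)%:Z + i%:Z - i'%:Z) * (l q)%:Z.
    by rewrite !PoszM mulrBl mulrDl.
  rewrite mulf_eq0 (negbTE lq0) orbF subr_eq0 addrC eq_sym.
  case: (eqVneq (i' : int) (i%:Z + D * (k q)%:Z)) => [Ei|_]; rewrite ?andbF ?andbT //.
  by rewrite -eqz_nat -!modz_nat Ei addrC modzMDl eqxx.
have Hterm3 : forall (i : 'I_(r q m * k q)) (i' : 'I_(r q m' * k q)),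
  (if ((i %% k q)%N == (i' %% k q)%N) && (K + (i * l q)%N%:Z - (i' * l q)%N%:Z == 0)
    then nth 0 (V q m) i * (nth 0 (V q m') i')^* * E0 else 0)
  = nth 0 (V q m) i * E0 *
      (if (i' : int) == i%:Z + D * (k q)%:Z then (nth 0 (V q m') i')^* else 0).
  by move=> i i'; rewrite Hcond; case: ifP => _; rewrite ?mulr0 // mulrAC.
rewrite (eq_bigr _ (fun i _ => eq_bigr _ (fun i' _ => Hterm3 i i'))).
transitivity (\sum_(i < r q m * k q)
   nth 0 (V q m) i * E0 * (seqval (V q m') (i%:Z + D * (k q)%:Z))^*).
  by apply: eq_bigr => i _; rewrite -mulr_sumr sum_pick.
transitivity (E0 * acorr (V q m) (V q m') (D * (k q)%:Z)).
  rewrite /acorr HVlen mulr_sumr; apply: eq_bigr => i _.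
  by rewrite mulrAC mulrC.
have [_ [_ HVc]] := HV q.
rewrite HVc; case: ifP => [/andP [Hm /eqP D0]|_]; last by rewrite mulr0.
by move: Hc; rewrite eq_Tagged /= Hm HK D0 !mul0r eqxx.
Qed.
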